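(* Suppose there is a polynomial $p_2$ such that for every $d\ge 2$, every Boolean matrix $M\in\{0,1\}^{n\times m}$ ($n,m\ge1$) of rank at most $d$ contains a submatrix $M|_{S\times T}$ ($S\subseteq[n]$, $T\subseteq[m]$) in which every column is constant and $|S||T|\ge nm\cdot 2^{-p_2(\log d)}$. Then for every integer $k\ge 2$ there is a polynomial $p_k$ such that for every $d\ge 2$, every $k$-listable real matrix $M\in\mathbb R^{n\times m}$ of rank at most $d$ contains a $1$-listable submatrix $M|_{S\times T}$ with $|S||T|\ge nm\cdot 2^{-p_k(\log d)}$.
   Context: A real matrix is $k$-listable if every column contains at most $k$ distinct entries; $1$-listable means every column is constant. For $S\subseteq[n]$, $T\subseteq[m]$, $M|_{S\times T}$ is the submatrix with rows $S$ and columns $T$, of size $|S||T|$. Logarithms are base 2. *)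

(* Defs.v *)
From Stdlib Require Import Reals.
From mathcomp Require Import all_boot all_order all_algebra.
From mathcomp Require Import Rstruct.
Set Implicit Arguments. Unset Strict Implicit. Unset Printing Implicit Defensive.

Definition log2 (x : R) : R := (ln x / ln 2)%R.

Definition listable_on (k : nat) (n m : nat) (M : 'M[R]_(n, m))
  (S : {set 'I_n}) (T : {set 'I_m}) : Prop :=
  forall j : 'I_m, j \in T -> size (undup [seq M i j | i <- enum S]) <= k.

Definition listable (k : nat) (n m : nat) (M : 'M[R]_(n, m)) : Prop :=
  listable_on k M setT setT.

Definition boolean_mx (n m : nat) (M : 'M[R]_(n, m)) : Prop :=
  forall i j, M i j = 0%R \/ M i j = 1%R.

(* Main.v *)
Require Import Defs.
From Stdlib Require Import Reals Lra.

Lemma Rp_mono_S x y : (x <= y)%R -> (Rpower 2 x <= Rpower 2 y)%R.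
Proof. intro h; apply Rle_Rpower; lra. Qed.

Lemma Rp_half : Rpower 2 (- (1)) = (/2)%R.
Proof. rewrite Rpower_Ropp, Rpower_1; lra. Qed.

Lemma Rp_half2 : (Rpower 2 (- (1)) + Rpower 2 (- (1)) = 1)%R.
Proof. rewrite Rp_half; lra. Qed.
From mathcomp Require Import all_boot all_order all_algebra.
From mathcomp Require Import Rstruct.
From mathcomp Require Import zify ring lra.
Set Implicit Arguments. Unset Strict Implicit. Unset Printing Implicit Defensive.
Import Order.TTheory GRing.Theory Num.Theory.
Local Open Scope ring_scope.

Lemma rank_sum_le (I : finType) p q (F : I -> 'M[R]_(p,q)) :
  (\rank (\sum_(i : I) F i)%R <= \sum_(i : I) \rank (F i))%N.
Proof.
apply: (big_ind2 (fun (B : 'M[R]_(p,q)) k => \rank B <= k)%N).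
- by rewrite mxrank0.
- move=> B1 k1 B2 k2 h1 h2; exact: leq_trans (mxrank_add _ _) (leq_add h1 h2).
- by [].
Qed.

Lemma rank_prod_affine (n m n' m' K : nat) (M : 'M[R]_(n,m))
  (f : 'I_n' -> 'I_n) (g : 'I_m' -> 'I_m) (al be : 'I_m' -> 'I_K -> R) :
  (\rank (\matrix_(i, j) \prod_(s < K) (al j s * M (f i) (g j) + be j s))%R
     <= (\rank M).+1 ^ K)%N.
Proof.
set r := \rank M.
pose A := col_base M; pose Bm := row_base M.
have hM : M = A *m Bm by rewrite mulmx_base.
pose a (i : 'I_n') (o : ('I_1 + 'I_r)%type) : R :=
  match o with inl _ => 1 | inr t => A (f i) t end.
pose bb (j : 'I_m') (s : 'I_K) (o : ('I_1 + 'I_r)%type) : R :=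
  match o with inl _ => be j s | inr t => al j s * Bm t (g j) end.
have E : forall i j s, al j s * M (f i) (g j) + be j s
   = \sum_(o : ('I_1 + 'I_r)%type) a i o * bb j s o.
  move=> i j s; rewrite big_sumType /= big_ord1 mul1r addrC; congr (_ + _).
  have -> : M (f i) (g j) = (A *m Bm) (f i) (g j) by rewrite mulmx_base.
  rewrite mxE mulr_sumr; apply: eq_bigr => t _ /=; rewrite mulrCA.
  by [].
have ->: (\matrix_(i, j) \prod_(s < K) (al j s * M (f i) (g j) + be j s))
   = \sum_(rho : {ffun 'I_K -> ('I_1 + 'I_r)%type})
        (\col_i \prod_(s < K) a i (rho s)) *m (\row_j \prod_(s < K) bb j s (rho s)).
  apply/matrixP => i j; rewrite !mxE summxE.
  under eq_bigr do rewrite E.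
  rewrite bigA_distr_bigA; apply: eq_bigr => rho _.
  rewrite mxE big_ord1 !mxE -big_split /=; by [].
apply: leq_trans (rank_sum_le _) _.
apply: leq_trans (_ : (\sum_(rho : {ffun 'I_K -> ('I_1 + 'I_r)%type}) 1 <= _)%N).
  apply: leq_sum => rho _; exact: leq_trans (mxrankM_maxl _ _) (rank_leq_col _).
by rewrite sum1_card card_ffun card_sum !card_ord.
Qed.

Lemma undup_le1 (T : eqType) (s : seq T) (c : T) :
  (forall x, x \in s -> x = c) -> (size (undup s) <= 1)%N.
Proof.
move=> H; have : (size (undup s) <= size [:: c])%N.
  apply: uniq_leq_size (undup_uniq s) _ => x; rewrite mem_undup inE => /H ->.
  exact: eqxx.
by [].
Qed.

Lemma undup_le1_eq (T : eqType) (s : seq T) x y :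
  (size (undup s) <= 1)%N -> x \in s -> y \in s -> x = y.
Proof.
rewrite -(mem_undup s) -[y \in s](mem_undup s).
case: (undup s) => [|z [|w t]] //= _; rewrite !inE => /eqP -> /eqP -> //.
Qed.

Lemma Rp_pos x : 0 < Rpower 2 x.
Proof. apply/RltP; rewrite /Rpower; exact: exp_pos. Qed.

Lemma Rp_add x y : Rpower 2 (x + y) = Rpower 2 x * Rpower 2 y.
Proof. exact: Rpower_plus. Qed.

Lemma Rp_mono x y : x <= y -> Rpower 2 x <= Rpower 2 y.
Proof. move/RleP=> h; apply/RleP; exact: Rp_mono_S. Qed.

Lemma arA (X Y Z P Q H : R) : 0 <= X -> X * P <= Y -> Y <= Z + Z ->
  Q <= P * H -> H + H = 1 -> X * Q <= Z.
Proof.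
move=> h1 h2 h3 h4 h5.
have hH : 0 <= H by lra.
have e1 : X * Q <= X * (P * H) by rewrite ler_wpM2l.
have e2 : X * P * H <= Y * H by rewrite ler_wpM2r.
have e3 : Y * H <= (Z + Z) * H by rewrite ler_wpM2r.
have e4 : (Z + Z) * H = Z by rewrite -[RHS]mulr1 -h5; ring.
lra.
Qed.

Lemma arB (X Y Z W P Pq Q H : R) : 0 <= X -> X * P <= Y -> Y <= Z + Z ->
  Z * Pq <= W -> Q <= P * H * Pq -> 0 <= Pq -> H + H = 1 -> X * Q <= W.
Proof.
move=> h1 h2 h3 h4 h5 h6 h7.
have hH : 0 <= H by lra.
have e1 : X * Q <= X * (P * H * Pq) by rewrite ler_wpM2l.
have e2 : X * P * H * Pq <= Y * H * Pq by rewrite ler_wpM2r // ler_wpM2r.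
have e3 : Y * H * Pq <= (Z + Z) * H * Pq by rewrite ler_wpM2r // ler_wpM2r.
have e4 : (Z + Z) * H = Z by rewrite -[RHS]mulr1 -h7; ring.
rewrite e4 in e3.
have e5 : X * (P * H * Pq) = X * P * H * Pq by ring.
lra.
Qed.

Lemma log2_pow d e : (0 < d)%N -> log2 (INR (d ^ e)) = INR e * log2 (INR d).
Proof.
move=> hd; rewrite /log2.
have -> : INR (d ^ e) = pow (INR d) e by rewrite !INRE natrX RpowE.
rewrite ln_pow; last by apply/RltP; rewrite INRE ltr0n.
by rewrite RmultE mulrA.
Qed.

Definition hyp2 (p2 : {poly R}) : Prop :=
  forall d : nat, (2 <= d)%N ->
  forall (n m : nat), (0 < n)%N -> (0 < m)%N ->
  forall M : 'M[R]_(n, m),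
    boolean_mx M -> (\rank M <= d)%N ->
    exists (S : {set 'I_n}) (T : {set 'I_m}),
      listable_on 1 M S T /\
      (INR (#|S| * #|T|) >= INR (n * m) * Rpower 2 (- p2.[log2 (INR d)])).

Definition good (k : nat) (q : {poly R}) : Prop :=
  forall d : nat, (2 <= d)%N ->
  forall (n m : nat) (M : 'M[R]_(n, m)), (\rank M <= d)%N ->
  forall (S0 : {set 'I_n}) (T0 : {set 'I_m}), (0 < #|S0|)%N -> (0 < #|T0|)%N ->
    listable_on k M S0 T0 ->
    exists (S : {set 'I_n}) (T : {set 'I_m}),
      listable_on 1 M S T /\
      (INR (#|S| * #|T|) >= INR (#|S0| * #|T0|) * Rpower 2 (- q.[log2 (INR d)])).

Lemma good0 : good 1 0.
Proof.
move=> d hd n m M hr S0 T0 hS0 hT0 hL; exists S0, T0; split => //.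
rewrite horner0 RoppE oppr0.
have -> : Rpower 2 0 = 1 by apply: Rpower_O; exact: Rlt_0_2.
by rewrite mulr1.
Qed.

Lemma good_step p2 k qk : hyp2 p2 -> (forall x, 0 <= qk.[x]) -> good k.+1 qk ->
  good k.+2 ((p2 \Po (INR (2 * k.+1) *: 'X)) * (p2 \Po (INR (2 * k.+1) *: 'X))
             + 2%:P + qk).
Proof.
move=> Hp Hq0 IH d hd n m M hr S0 T0 hS0 hT0 hL.
set h := p2 \Po (INR (2 * k.+1) *: 'X).
pose vals (j : 'I_m) := undup [seq M i j | i <- enum S0].
pose a j := head 0 (vals j).
pose oth j := behead (vals j).
pose al (j : 'I_m) (s : 'I_k.+1) : R :=
  if (s < size (oth j))%N then (a j - nth 0 (oth j) s)^-1 else 0.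
pose be (j : 'I_m) (s : 'I_k.+1) : R :=
  if (s < size (oth j))%N then - nth 0 (oth j) s * (a j - nth 0 (oth j) s)^-1
  else 1.
have vE : forall i j, i \in S0 -> vals j = a j :: oth j /\ M i j \in vals j.
  move=> i j hi.
  have hv : M i j \in vals j by rewrite mem_undup; apply: map_f; rewrite mem_enum.
  split=> //; rewrite /a /oth; move: hv; case: (vals j) => //.
have hsz : forall j, j \in T0 -> (size (oth j) <= k.+1)%N.
  move=> j hj; have := hL j hj; rewrite /oth /vals size_behead; lia.
have key : forall i j, i \in S0 -> j \in T0 ->
    \prod_(s < k.+1) (al j s * M i j + be j s) = (M i j == a j)%:R.
  move=> i j hi hj; have [vEj hv] := vE i j hi.
  have hu : uniq (a j :: oth j) by rewrite -vEj undup_uniq.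
  case: eqP => [e|ne].
  - rewrite big1 // => s _; rewrite /al /be; case: ifP => hs; last first.
      by rewrite mul0r add0r.
    have hw : a j - nth 0 (oth j) s != 0.
      rewrite subr_eq0; apply/negP => /eqP aw; move: hu.
      by rewrite /= aw mem_nth.
    by rewrite e [_^-1 * _]mulrC -mulrDl divff.
  - have hx : M i j \in oth j.
      by move: hv; rewrite vEj inE => /orP [/eqP e|//]; case: ne.
    have hs0 : (index (M i j) (oth j) < k.+1)%N.
      by apply: leq_trans (hsz j hj); rewrite index_mem.
    rewrite (bigD1 (Ordinal hs0)) //= /al /be /= index_mem hx /= nth_index //.
    by rewrite [_^-1 * _]mulrC -mulrDl subrr !mul0r.
pose f : 'I_#|S0| -> 'I_n := enum_val.
pose g : 'I_#|T0| -> 'I_m := enum_val.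
pose B' : 'M[R]_(#|S0|, #|T0|) :=
  \matrix_(i, j) \prod_(s < k.+1) (al (g j) s * M (f i) (g j) + be (g j) s).
have hB : forall i j, B' i j = (M (f i) (g j) == a (g j))%:R.
  by move=> i j; rewrite mxE key // enum_valP.
have hbool : boolean_mx B'.
  by move=> i j; rewrite hB; case: eqP => _; [right|left].
have hd0 : (0 < d)%N by lia.
pose d' := (d ^ (2 * k.+1))%N.
have hd' : (2 <= d')%N.
  apply: leq_trans hd _; rewrite /d' -{1}(expn1 d); apply: leq_pexp2l => //; lia.
have hrB : (\rank B' <= d')%N.
  apply: leq_trans (rank_prod_affine M f g (fun j => al (g j)) (fun j => be (g j))) _.
  rewrite /d' expnM -mulnn.
  apply: (@leq_trans (d.+1 ^ k.+1)); first by rewrite leq_exp2r // ltnS.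
  rewrite leq_exp2r //; nia.
have [S' [T' [hL1 hb]]] := Hp d' hd' #|S0| #|T0| hS0 hT0 B' hbool hrB.
rewrite log2_pow // in hb.
set L := log2 (INR d) in hb *.
have hh : p2.[INR (2 * k.+1) * L] = h.[L] by rewrite /h horner_comp hornerZ hornerX.
rewrite hh in hb.
set P := Rpower 2 (- h.[L]) in hb.
have hX0 : 0 < INR (#|S0| * #|T0|) by rewrite INRE ltr0n muln_gt0 hS0 hT0.
have hXP : 0 < INR (#|S0| * #|T0|) * P by rewrite mulr_gt0 // Rp_pos.
have hpos : (0 < #|S'| * #|T'|)%N.
  rewrite lt0n; apply/eqP => e0; move: hb; rewrite e0 => hb.
  by move: (lt_le_trans hXP hb); rewrite [INR 0]INRE ltr0n.
move: (hpos); rewrite muln_gt0 => /andP [hS' hT'].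
have [i0 hi0] : exists i0, i0 \in S' by apply/set0Pn; rewrite -card_gt0.
have cst : forall i j, i \in S' -> j \in T' -> B' i j = B' i0 j.
  move=> i j hi hj; apply: (undup_le1_eq (hL1 j hj)); apply: map_f;
  by rewrite mem_enum.
pose Tone := [set j | B' i0 j == 1].
have hcard := cardsID Tone T'.
pose S := f @: S'.
have cS : #|S| = #|S'| by rewrite card_imset //; exact: enum_val_inj.
have hinS : forall x j, x \in [seq M i j | i <- enum S] ->
    exists2 i', i' \in S' & x = M (f i') j.
  by move=> x j /mapP [i]; rewrite mem_enum => /imsetP [i' hi' ->] ->; exists i'.
have hQ : (h * h + 2%:P + qk).[L] = h.[L] * h.[L] + 2 + qk.[L] by rewrite !hornerE.
have hH := Rp_half2.
have hX0' : 0 <= INR (#|S0| * #|T0|) by apply: ltW.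
have [hA|hA] : (#|T'| <= 2 * #|T' :&: Tone|)%N \/ (#|T'| <= 2 * #|T' :\: Tone|)%N.
  rewrite -hcard; move: (#|T' :&: Tone|) (#|T' :\: Tone|) => x y; lia.
- exists S, (g @: (T' :&: Tone)); split.
  + move=> j /imsetP [j' hj' ->]; move: hj'; rewrite inE => /andP [hjT].
    rewrite inE => /eqP hone.
    apply: (undup_le1 (c := a (g j'))) => x /hinS [i' hi' ->].
    have := cst i' j' hi' hjT; rewrite hone hB; case: eqP => // _.
    by move/eqP; rewrite eq_sym oner_eq0.
  + rewrite cS card_imset; last exact: enum_val_inj.
    apply: (arA (Y := INR (#|S'| * #|T'|)) (P := P) (H := Rpower 2 (- (1)))) => //.
    * move: hA; rewrite !INRE -natrD ler_nat.
      move: (#|S'|) (#|T'|) (#|T' :&: Tone|) => x y z; nia.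
    * rewrite /P -Rp_add; apply: Rp_mono; rewrite hQ !RoppE !RplusE.
      rewrite (_ : IZR 1 = 1) //.
      have := Hq0 L; move: (h.[L]) (qk.[L]) => u v; nra.
- have hT0' : (0 < #|T' :\: Tone|)%N by lia.
  pose T := g @: (T' :\: Tone).
  have cT : #|T| = #|T' :\: Tone| by rewrite card_imset //; exact: enum_val_inj.
  have hLT : listable_on k.+1 M S T.
    move=> j /imsetP [j' hj' ->]; move: hj'; rewrite !inE => /andP [hnot hjT].
    have hgj : g j' \in T0 := enum_valP j'.
    apply: leq_trans (hsz _ hgj).
    apply: uniq_leq_size (undup_uniq _) _ => x; rewrite mem_undup => /hinS [i' hi' ->].
    have [vEj hv] := vE (f i') (g j') (enum_valP i').
    move: hv; rewrite vEj inE => /orP [/eqP e|hx]; last exact: hx.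
    by move: hnot; rewrite -(cst i' j' hi' hjT) hB e eqxx mulr1n eqxx.
  have hSpos : (0 < #|S|)%N by rewrite cS.
  have hTpos : (0 < #|T|)%N by rewrite cT.
  have [S2 [T2 [hL2 hb2]]] := IH d hd n m M hr S T hSpos hTpos hLT.
  exists S2, T2; split => //.
  apply: (arB (Y := INR (#|S'| * #|T'|)) (Z := INR (#|S| * #|T|)) (P := P)
     (Pq := Rpower 2 (- qk.[L])) (H := Rpower 2 (- (1)))) => //.
  * move: hA; rewrite cS cT !INRE -natrD ler_nat.
    move: (#|S'|) (#|T'|) (#|T' :\: Tone|) => x y z; nia.
  * rewrite /P -!Rp_add; apply: Rp_mono; rewrite hQ !RoppE !RplusE.
    rewrite (_ : IZR 1 = 1) //.
    move: (h.[L]) (qk.[L]) => u v; nra.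
  * apply: ltW; exact: Rp_pos.
Qed.

Lemma good_all p2 : hyp2 p2 -> forall k, exists q : {poly R},
  (forall x, 0 <= q.[x]) /\ good k.+1 q.
Proof.
move=> Hp; elim=> [|k [qk [hq0 IH]]].
  by exists 0; split; [move=> x; rewrite horner0 | exact: good0].
exists ((p2 \Po (INR (2 * k.+1) *: 'X)) * (p2 \Po (INR (2 * k.+1) *: 'X))
             + 2%:P + qk); split; last exact: good_step.
move=> x; rewrite hornerD hornerD hornerM hornerC; have := hq0 x.
move: (qk.[x]) => v; move: (_.[x]) => u; nra.
Qed.

Theorem theorem2p10 :
  (exists p2 : {poly R},
     forall d : nat, (2 <= d)%N ->
     forall (n m : nat), (0 < n)%N -> (0 < m)%N ->
     forall M : 'M[R]_(n, m),
       boolean_mx M -> (\rank M <= d)%N ->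
       exists (S : {set 'I_n}) (T : {set 'I_m}),
         listable_on 1 M S T /\
         (INR (#|S| * #|T|) >= INR (n * m) * Rpower 2 (- p2.[log2 (INR d)]%R))%R) ->
  forall k : nat, (2 <= k)%N ->
  exists pk : {poly R},
     forall d : nat, (2 <= d)%N ->
     forall (n m : nat), (0 < n)%N -> (0 < m)%N ->
     forall M : 'M[R]_(n, m),
       listable k M -> (\rank M <= d)%N ->
       exists (S : {set 'I_n}) (T : {set 'I_m}),
         listable_on 1 M S T /\
         (INR (#|S| * #|T|) >= INR (n * m) * Rpower 2 (- pk.[log2 (INR d)]%R))%R.
Proof.
move=> [p2 Hp] k hk.
have [q [_ Hq]] := good_all Hp k.-1.
rewrite prednK in Hq; last by lia.
exists q => d hd n m hn hm M hL hr.
have H := Hq d hd n m M hr [set: 'I_n] [set: 'I_m].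
rewrite !cardsT !card_ord in H.
exact: H hn hm hL.
Qed.
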